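(* Let $n\ge1$, $L,G>0$ and $\eta>0$ with $\eta L\le 1$. Let $a_1,\dots,a_n\in[0,L]$ and $b_1,\dots,b_n\in[-G,G]$ with $\sum_{i=1}^nb_i=0$. For a permutation $\sigma$ of $\{1,\dots,n\}$ define \[ X_\sigma=\sum_{j=1}^n\left(\prod_{i=j+1}^n(1-\eta a_{\sigma(i)})\right)b_{\sigma(j)} \] (an empty product equals $1$). If $\sigma$ is a uniformly random permutation, then \[ \mathbb{E}_\sigma\big[X_\sigma^2\big]\;\le\;5\eta^2n^3L^2G^2\log(2n). \] *)

(* Defs.v *)
From mathcomp Require Import all_boot all_fingroup.
From Stdlib Require Import Reals.
Set Implicit Arguments. Unset Strict Implicit. Unset Printing Implicit Defensive.

(* Indices are 0-based: {1..n} is 'I_n.  For sigma a permutation,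
   X_sigma = sum_j (prod_{i > j} (1 - eta a_{sigma i})) * b_{sigma j}. *)
Definition Xsig (n : nat) (eta : R) (a b : 'I_n -> R) (s : {perm 'I_n}) : R :=
  \big[Rplus/0%R]_(j < n)
     Rmult (\big[Rmult/1%R]_(i < n | (j < i)%N) Rminus 1%R (Rmult eta (a (s i))))
           (b (s j)).

Definition EXsq (n : nat) (eta : R) (a b : 'I_n -> R) : R :=
  Rdiv (\big[Rplus/0%R]_(s : {perm 'I_n}) Rsqr (Xsig eta a b s))
       (INR #|{perm 'I_n}|).

(* Main.v *)
Require Import Defs.
From HB Require Import structures.
From mathcomp Require Import all_boot all_fingroup.
From Stdlib Require Import Reals.
From Stdlib Require Import Lra.
Set Implicit Arguments. Unset Strict Implicit. Unset Printing Implicit Defensive.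
Local Open Scope R_scope.
Lemma RplusA : associative Rplus. Proof. by move=>*; rewrite Rplus_assoc. Qed.
Lemma RmultA : associative Rmult. Proof. by move=>*; rewrite Rmult_assoc. Qed.
HB.instance Definition _ := Monoid.isComLaw.Build R 0 Rplus RplusA Rplus_comm Rplus_0_l.
HB.instance Definition _ := Monoid.isComLaw.Build R 1 Rmult RmultA Rmult_comm Rmult_1_l.
HB.instance Definition _ := Monoid.isMulLaw.Build R 0 Rmult Rmult_0_l Rmult_0_r.
HB.instance Definition _ := Monoid.isAddLaw.Build R Rmult Rplus Rmult_plus_distr_r Rmult_plus_distr_l.

Lemma sumR_le (I : Type) (r : seq I) (P : pred I) (F1 F2 : I -> R) :
  (forall i, P i -> F1 i <= F2 i) ->
  \big[Rplus/0]_(i <- r | P i) F1 i <= \big[Rplus/0]_(i <- r | P i) F2 i.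
Proof. move=> H; apply: (big_ind2 (fun x y => x <= y)) => //; [lra | intros; lra]. Qed.

Lemma sumR_ge0 (I : Type) (r : seq I) (P : pred I) (F : I -> R) :
  (forall i, P i -> 0 <= F i) -> 0 <= \big[Rplus/0]_(i <- r | P i) F i.
Proof. move=> H; apply: (big_ind (fun x => 0 <= x)) => //; [lra | intros; lra]. Qed.

Lemma sumR_const (I : finType) (c : R) : \big[Rplus/0]_(i : I) c = INR #|I| * c.
Proof.
rewrite big_const; elim: #|I| => [|k IH]; first by rewrite /=; lra.
rewrite iterS IH S_INR; lra.
Qed.

Lemma Rabs_sum (I : Type) (r : seq I) (P : pred I) (F : I -> R) :
  Rabs (\big[Rplus/0]_(i <- r | P i) F i) <= \big[Rplus/0]_(i <- r | P i) Rabs (F i).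
Proof.
apply: (big_ind2 (fun x y => Rabs x <= y)).
- rewrite Rabs_R0; lra.
- move=> x1 x2 y1 y2 H1 H2; have := Rabs_triang x1 y1; lra.
- move=> i _; lra.
Qed.

Lemma sumR_distrr (I : Type) (r : seq I) (P : pred I) a (F : I -> R) :
  a * \big[Rplus/0]_(i <- r | P i) F i = \big[Rplus/0]_(i <- r | P i) (a * F i).
Proof. exact: big_distrr. Qed.
Lemma sumR_distrl (I : Type) (r : seq I) (P : pred I) a (F : I -> R) :
  \big[Rplus/0]_(i <- r | P i) F i * a = \big[Rplus/0]_(i <- r | P i) (F i * a).
Proof. exact: big_distrl. Qed.
Lemma sumR_split (I : Type) (r : seq I) (P : pred I) (F G : I -> R) :
  \big[Rplus/0]_(i <- r | P i) (F i + G i) =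
  \big[Rplus/0]_(i <- r | P i) F i + \big[Rplus/0]_(i <- r | P i) G i.
Proof. exact: big_split. Qed.

Lemma cauchy_schwarz (I : finType) (x : I -> R) :
  Rsqr (\big[Rplus/0]_(i : I) x i) <= INR #|I| * \big[Rplus/0]_(i : I) Rsqr (x i).
Proof.
rewrite /Rsqr sumR_distrl /=.
have E : forall i, x i * \big[Rplus/0]_(j : I) x j = \big[Rplus/0]_(j : I) (x i * x j).
  by move=> i; rewrite sumR_distrr.
rewrite (eq_bigr _ (fun i _ => E i)).
apply: (Rle_trans _ (\big[Rplus/0]_(i:I) \big[Rplus/0]_(j:I) ((x i * x i + x j * x j)/2))).
  apply: sumR_le => i _; apply: sumR_le => j _.
  have := Rle_0_sqr (x i - x j); rewrite /Rsqr; lra.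
rewrite [X in X <= _](_ : _ = (\big[Rplus/0]_(i : I) (INR #|I| * (x i * x i) + \big[Rplus/0]_(j : I) (x j * x j))) * /2).
  rewrite sumR_split /= -sumR_distrr /= sumR_const. apply: Req_le.
  have H : forall N S : R, (N*S+N*S)*/2 = N*S by intros; field.
  apply: H.
rewrite (@sumR_distrl _ _ _ (/2)) /=. apply: eq_bigr => i _.
rewrite /Rdiv -sumR_distrl /= sumR_split /= sumR_const. reflexivity.
Qed.

Definition Yf (c d : nat -> R) (m : nat) : R :=
  \big[Rplus/0]_(j < m) ((\big[Rmult/1]_(i < m | leq (S j) i) (1 - c i)) * d j).
Definition Tf (d : nat -> R) (m : nat) : R := \big[Rplus/0]_(j < m) d j.

Lemma Yf_rec c d m : Yf c d m.+1 = (1 - c m) * Yf c d m + d m.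
Proof.
rewrite /Yf big_ord_recr /=.
rewrite (@big1 _ _ _ _ _ _ (fun i : 'I_m.+1 => 1 - c i)); last first.
  by move=> i; rewrite ltnNge -ltnS ltn_ord.
rewrite Rmult_1_l sumR_distrr; congr (_ + _).
apply: eq_bigr => j _.
rewrite big_mkcond big_ord_recr /= ltn_ord -big_mkcond /=.
ring.
Qed.

Lemma Tf_rec d m : Tf d m.+1 = Tf d m + d m.
Proof. by rewrite /Tf big_ord_recr. Qed.

Lemma YT_bound c d K m : (forall i, 0 <= c i <= K) -> K <= 1 ->
  Rabs (Yf c d m - Tf d m) <= K * \big[Rplus/0]_(i < m) Rabs (Tf d i).
Proof.
move=> Hc HK; elim: m => [|m IH].
  rewrite /Yf /Tf !big_ord0 Rminus_0_r Rabs_R0 Rmult_0_r; lra.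
rewrite Yf_rec Tf_rec big_ord_recr /=.
have -> : (1 - c m) * Yf c d m + d m - (Tf d m + d m)
          = (1 - c m) * (Yf c d m - Tf d m) + (- (c m * Tf d m)) by ring.
have [c0 cK] := Hc m.
apply: Rle_trans (Rabs_triang _ _) _.
rewrite Rabs_Ropp !Rabs_mult (Rabs_pos_eq (1 - c m)) ?(Rabs_pos_eq (c m)); try lra.
have h1 : (1 - c m) * Rabs (Yf c d m - Tf d m) <= Rabs (Yf c d m - Tf d m).
  have := Rabs_pos (Yf c d m - Tf d m); nra.
have h2 : c m * Rabs (Tf d m) <= K * Rabs (Tf d m).
  have := Rabs_pos (Tf d m); nra.
apply: Rle_trans (Rplus_le_compat _ _ _ _ (Rle_trans _ _ _ h1 IH) h2) _.
apply: Req_le; rewrite Rmult_plus_distr_l; reflexivity.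
Qed.

Lemma sumR_D1 (I : finType) (j : I) (P : pred I) (F : I -> R) : P j ->
  \big[Rplus/0]_(i | P i) F i = F j + \big[Rplus/0]_(i | P i && (i != j)) F i.
Proof. exact: bigD1. Qed.

Lemma sumR_exch (I J : finType) (F : I -> J -> R) :
  \big[Rplus/0]_(i : I) \big[Rplus/0]_(j : J) F i j =
  \big[Rplus/0]_(j : J) \big[Rplus/0]_(i : I) F i j.
Proof. exact: exchange_big. Qed.

Lemma sum_perm n (b : 'I_n -> R) (s : {perm 'I_n}) :
  \big[Rplus/0]_(i < n) b (s i) = \big[Rplus/0]_(i < n) b i.
Proof. by rewrite [RHS](reindex_inj (@perm_inj _ s)). Qed.

Lemma cross n (b : 'I_n -> R) (u v : 'I_n) : u != v ->
  \big[Rplus/0]_(i < n) b i = 0 ->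
  \big[Rplus/0]_(s : {perm 'I_n}) (b (s u) * b (s v)) <= 0.
Proof.
move=> uv b0.
pose C w := \big[Rplus/0]_(s : {perm 'I_n}) (b (s u) * b (s w)).
have Ceq : forall w, w != u -> C w = C v.
  move=> w wu; rewrite /C [in RHS](reindex_inj (@mulgI _ (tperm v w))) /=.
  apply: eq_bigr => s _; rewrite !permM tpermL tpermD //.
  by rewrite eq_sym.
have sum0 : \big[Rplus/0]_(w < n) C w = 0.
  rewrite /C sumR_exch big1 // => s _.
  by rewrite -sumR_distrr sum_perm b0 Rmult_0_r.
have Cu : 0 <= C u.
  apply: sumR_ge0 => s _; apply: Rle_0_sqr.
rewrite (@sumR_D1 _ u) // in sum0.
rewrite (eq_bigr (fun _ => C v)) in sum0; last by move=> w /= /Ceq.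
destruct (Rle_or_lt (C v) 0) as [H|H]; first exact H.
exfalso.
rewrite (@sumR_D1 _ v) /= in sum0; last by rewrite eq_sym.
have : 0 <= \big[Rplus/0]_(i < n | (i != u) && (i != v)) C v.
  by apply: sumR_ge0 => *; lra.
move=> h; clearbody C; move: sum0 h; set S := \big[Rplus/0]_(i < n | _) _ => sum0 h; lra.
Qed.

Lemma per_sigma n (L G eta : R) (a b : 'I_n.+1 -> R) (s : {perm 'I_n.+1}) :
  (0 < eta) -> (eta * L <= 1) ->
  (forall i, 0 <= a i <= L) ->
  \big[Rplus/0]_(i < n.+1) b i = 0 ->
  Rsqr (Xsig eta a b s) <=
  Rsqr (eta * L) * INR n.+1 *
    \big[Rplus/0]_(i < n.+1) Rsqr (Tf (fun j => b (s (inord j))) i).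
Proof.
move=> he hK ha b0.
set c := fun j : nat => eta * a (s (inord j)).
set d := fun j : nat => b (s (inord j)).
have EX : Xsig eta a b s = Yf c d n.+1.
  rewrite /Xsig /Yf; apply: eq_bigr => j _; rewrite /d inord_val; congr (_ * _).
  by apply: eq_bigr => i _; rewrite /c inord_val.
have ET : Tf d n.+1 = 0.
  rewrite /Tf (eq_bigr (fun j => b (s j))) ?sum_perm // => j _; by rewrite /d inord_val.
have Hc : forall i, 0 <= c i <= eta * L.
  move=> i; have [h1 h2] := ha (s (inord i)); rewrite /c; split; nra.
have HB := YT_bound d n.+1 Hc hK.
rewrite ET Rminus_0_r -EX in HB.
have S0 : 0 <= \big[Rplus/0]_(i < n.+1) Rabs (Tf d i).
  by apply: sumR_ge0 => i _; apply: Rabs_pos.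
have K0 : 0 <= eta * L.
  have [h1 h2] := ha ord0; nra.
rewrite Rsqr_abs.
apply: Rle_trans (Rsqr_incr_1 _ _ HB (Rabs_pos _) (Rmult_le_pos _ _ K0 S0)) _.
rewrite Rsqr_mult Rmult_assoc; apply: Rmult_le_compat_l; first exact: Rle_0_sqr.
have := cauchy_schwarz (fun i : 'I_n.+1 => Rabs (Tf d i)).
rewrite card_ord => h; apply: Rle_trans h _; apply: Req_le; congr (_ * _).
by apply: eq_bigr => i _; rewrite -Rsqr_abs.
Qed.

Lemma sumR_le0 (I : Type) (r : seq I) (P : pred I) (F : I -> R) :
  (forall i, P i -> F i <= 0) -> \big[Rplus/0]_(i <- r | P i) F i <= 0.
Proof. move=> H; apply: (big_ind (fun x => x <= 0)) => //; [lra | intros; lra]. Qed.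

Lemma sumT_bound n (G : R) (b : 'I_n.+1 -> R) (i : nat) :
  leq i n.+1 -> (forall j, - G <= b j <= G) ->
  \big[Rplus/0]_(i < n.+1) b i = 0 ->
  \big[Rplus/0]_(s : {perm 'I_n.+1}) Rsqr (Tf (fun j => b (s (inord j))) i)
    <= INR i * (INR #|{perm 'I_n.+1}| * (G * G)).
Proof.
move=> hi hb b0.
have E : forall s : {perm 'I_n.+1}, Rsqr (Tf (fun j => b (s (inord j))) i) =
   \big[Rplus/0]_(k < i) \big[Rplus/0]_(l < i) (b (s (inord k)) * b (s (inord l))).
  move=> s; rewrite /Rsqr /Tf sumR_distrl; apply: eq_bigr => k _.
  by rewrite sumR_distrr.
rewrite (eq_bigr _ (fun s _ => E s)) sumR_exch.
rewrite (eq_bigr (fun k : 'I_i => \big[Rplus/0]_(l < i) \big[Rplus/0]_(s : {perm 'I_n.+1}) (b (s (inord k)) * b (s (inord l))))); last first.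
  by move=> k _; rewrite sumR_exch.
apply: (Rle_trans _ (\big[Rplus/0]_(k < i) (INR #|{perm 'I_n.+1}| * (G * G)))); last first.
  by rewrite sumR_const card_ord; apply: Req_le.
apply: sumR_le => k _.
rewrite (@sumR_D1 _ k) //.
have h1 : \big[Rplus/0]_(l < i | true && (l != k)) \big[Rplus/0]_(s : {perm 'I_n.+1}) (b (s (inord k)) * b (s (inord l))) <= 0.
  apply: sumR_le0 => l /= lk; apply: cross => //.
  apply: contra lk => /eqP /(congr1 val); rewrite /= !inordK.
  - by move=> e; apply/eqP/val_inj.
  - exact: leq_trans (ltn_ord l) hi.
  - exact: leq_trans (ltn_ord k) hi.
have h2 : \big[Rplus/0]_(s : {perm 'I_n.+1}) (b (s (inord k)) * b (s (inord k))) <= INR #|{perm 'I_n.+1}| * (G * G).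
  rewrite -sumR_const; apply: sumR_le => s _.
  have [u1 u2] := hb (s (inord k)); nra.
have := Rplus_le_compat _ _ _ _ h2 h1; rewrite Rplus_0_r; exact.
Qed.

Local Close Scope R_scope.
Theorem lemma7 (n : nat) (L G eta : R) (a b : 'I_n -> R) :
  (1 <= n)%N ->
  (0 < L)%R -> (0 < G)%R -> (0 < eta)%R -> (eta * L <= 1)%R ->
  (forall i, 0 <= a i <= L)%R ->
  (forall i, - G <= b i <= G)%R ->
  \big[Rplus/0%R]_(i < n) b i = 0%R ->
  (EXsq eta a b <= 5 * eta ^ 2 * INR n ^ 3 * L ^ 2 * G ^ 2 * ln (2 * INR n))%R.
Proof.
Local Open Scope R_scope.
move=> hn hL hG he hK ha hb b0.
case: n a b ha hb b0 hn => [|n] a b ha hb b0 hn; first by [].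
set P := INR #|{perm 'I_n.+1}|.
have P0 : 0 < P.
  rewrite /P; apply: lt_0_INR; apply/ltP; apply/card_gt0P; by exists 1%g.
set N := INR n.+1.
have N1 : 1 <= N by rewrite /N S_INR; have := pos_INR n; lra.
have Hsum : \big[Rplus/0]_(s : {perm 'I_n.+1}) Rsqr (Xsig eta a b s)
    <= Rsqr (eta * L) * N * (N * (N * (P * (G * G)))).
  apply: (Rle_trans _ (\big[Rplus/0]_(s : {perm 'I_n.+1}) (Rsqr (eta*L) * N * \big[Rplus/0]_(i < n.+1) Rsqr (Tf (fun j => b (s (inord j))) i)))).
    by apply: sumR_le => s _; apply: (@per_sigma n L G eta a b s he hK ha b0).
  rewrite -sumR_distrr.
  apply: Rmult_le_compat_l; first by apply: Rmult_le_pos; [apply: Rle_0_sqr | lra].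
  rewrite sumR_exch.
  apply: (Rle_trans _ (\big[Rplus/0]_(i < n.+1) (INR i * (P * (G * G))))).
    by apply: sumR_le => i _; apply: sumT_bound => //; apply: ltnW (ltn_ord i).
  apply: (Rle_trans _ (\big[Rplus/0]_(i < n.+1) (N * (P * (G * G))))).
    apply: sumR_le => i _; apply: Rmult_le_compat_r.
      apply: Rmult_le_pos; [lra | apply: Rle_0_sqr].
    by apply: le_INR; apply/leP; apply: ltnW (ltn_ord i).
  by rewrite sumR_const card_ord; apply: Req_le.
rewrite /EXsq /Rdiv -/P.
apply: Rle_trans (Rmult_le_compat_r _ _ _ (Rlt_le _ _ (Rinv_0_lt_compat _ P0)) Hsum) _.
have -> : Rsqr (eta * L) * N * (N * (N * (P * (G * G)))) * / P
          = eta ^ 2 * N ^ 3 * L ^ 2 * G ^ 2.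
  rewrite /Rsqr; field; lra.
have hln : / 2 < ln (2 * N).
  apply: Rlt_le_trans ln_lt_2 _.
  destruct (Rle_lt_or_eq_dec 1 N N1) as [h|h].
    apply: Rlt_le; apply: ln_increasing; lra.
  by rewrite -h Rmult_1_r; apply: Rle_refl.
have Q0 : 0 <= eta ^ 2 * N ^ 3 * L ^ 2 * G ^ 2.
  repeat apply: Rmult_le_pos; try apply: pow_le; lra.
nra.
Qed.
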